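(* Let $\overline F_1=\mathrm{As}\odot\Bbbk\{\mathsf f_n\mid n\ge1\}\odot\mathrm{As}$ be the free $\mathrm{As}$-$\mathrm{As}$-bimodule on generators $\mathsf f_n$ of arity $n$, degree $1-n$, with differential $$\mathsf f_k\partial=\sum_{r+2+t=k}(-1)^t(1^{\otimes r}\otimes m\otimes1^{\otimes t})\mathsf f_{k-1}+\sum_{i+j=k,\ i,j\ge1}(-1)^j(\mathsf f_i\otimes\mathsf f_j)m,$$ where $m=m^{(2)}$. Let $p:\overline F_1\to\mathrm{As}$ be the bimodule map with $\mathsf f_1\mapsto m^{(1)}$ and $\mathsf f_n\mapsto0$ for $n\ge2$. Then $p$ is a homotopy equivalence in the dg-category of left $\mathrm{As}$-modules, with homotopy inverse the left $\mathrm{As}$-module map $\beta:\mathrm{As}\to\overline F_1$, $m^{(1)}\mapsto\mathsf f_1$; in particular $\beta p=1_{\mathrm{As}}$ and $p\beta$ is homotopic to an invertible map.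
   Context: $\Bbbk$ a commutative ring; complexes of $\Bbbk$-modules, Koszul signs. $\mathrm{As}$ is the dg-operad with $\mathrm{As}(0)=0$, $\mathrm{As}(n)=\Bbbk m^{(n)}$ ($n\ge1$, degree 0), $m^{(1)}$ the unit, $(m^{(n_1)}\otimes\dots\otimes m^{(n_k)})m^{(k)}=m^{(n_1+\dots+n_k)}$. Compositions and actions are written on the right: $(a_1\otimes\dots\otimes a_k)p$ is the left action of operad elements $a_s$ on $p$ of arity $k$; $(p_1\otimes\dots\otimes p_k)b$ is the right action; $1$ is the operad unit. As a left $\mathrm{As}$-module, $\overline F_1$ is free on the elements $(\mathsf f_{i_1}\otimes\dots\otimes\mathsf f_{i_k})m^{(k)}$, $k\ge1$, $i_s\ge1$. For a dg-operad $\mathcal O$, the dg-category of left $\mathcal O$-modules has as objects collections with an associative unital left action $\mathcal O\odot\mathcal P\to\mathcal P$, degree-$t$ morphisms $f$ are families of degree-$t$ linear maps $f(n):\mathcal P(n)\to\mathcal Q(n)$ commuting with the left action, and the differential is $f\mapsto f\partial-(-1)^{t}\partial f$. Composition is written in diagrammatic order ($\beta p$ means $\beta$ then $p$). *)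

(* Defs.v *)
From HB Require Import structures.
From mathcomp Require Import all_boot all_order all_algebra.
Set Implicit Arguments. Unset Strict Implicit. Unset Printing Implicit Defensive.
Import Order.TTheory GRing.Theory Num.Theory.
Local Open Scope ring_scope.

(* * Arities: all collections below vanish in arity 0 (As(0) = 0 and hence  *)
(*   F1bar(0) = 0), so we only record arities >= 1; the index [n : nat]      *)
(*   always stands for the ARITY n.+1.                                       *)
(* * A collection is described by a finite basis in each arity, a degree    *)
(*   function on basis elements, the action of basis elements of As on       *)
(*   basis elements, and the matrix of the differential.  An element of     *)
(*   P(n.+1) is a vector {ffun basis -> R} (direct sum of all degrees).      *)
(* * A basis element of the left As-action in arity k = n.+1 is a tensor     *)
(*   m^(d_0 + 1) (x) ... (x) m^(d_n + 1), encoded by d : n.+1.-tuple nat; it  *)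
(*   sends arity n.+1 to arity (sumn d + n).+1.                              *)
(* * Compositions/actions are written on the right; the differential acts   *)
(*   with Koszul signs for right operators:                                 *)
(*       (x (x) y) (d (x) 1) = (-1)^|y| x d (x) y.                          *)

Record bmod (R : pzRingType) := BMod {
  bas : nat -> finType;
  bdeg : forall n, bas n -> int;
  bact : forall n (d : n.+1.-tuple nat), bas n -> bas (sumn d + n);
  bdiff : forall n, bas n -> bas n -> R   (* bdiff b b' = coeff of b' in b.d *)
}.
Arguments bas {R} b n.
Arguments bdeg {R} b {n}.
Arguments bact {R} b {n} d.
Arguments bdiff {R} b {n}.

Section Generic.
Variable R : pzRingType.
Variable M : bmod R.

Definition vec n := {ffun bas M n -> R}.

Definition vdiff n (v : vec n) : vec n :=
  [ffun b' => \sum_(b : bas M n) v b * bdiff M b b'].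

Definition vact n (d : n.+1.-tuple nat) (v : vec n) : vec (sumn d + n) :=
  [ffun b' => \sum_(b : bas M n | bact M d b == b') v b].

Definition homog n (k : int) (v : vec n) : Prop :=
  forall b, v b != 0 -> bdeg M b = k.
End Generic.

Arguments vec {R} M n.

Definition hom_of_deg (R : pzRingType) (M N : bmod R) (t : int)
  (f : forall n, vec M n -> vec N n) : Prop :=
  [/\ (forall n (a : R) (u v : vec M n),
         f n [ffun b => a * u b + v b] = [ffun b => a * f n u b + f n v b]),
      (forall n (k : int) (v : vec M n), homog k v -> homog (k + t) (f n v)) &
      (forall n (d : n.+1.-tuple nat) (v : vec M n),
         f (sumn d + n) (vact d v) = vact d (f n v))].

Definition closed_hom (R : pzRingType) (M N : bmod R)
  (f : forall n, vec M n -> vec N n) : Prop :=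
  forall n (v : vec M n), vdiff (f n v) = f n (vdiff v).

(* The operad As as a left As-module: As(n.+1) = R m^(n.+1), degree 0,       *)
(* zero differential, (m^(c_1) (x) ... (x) m^(c_k)) m^(k) = m^(c_1+..+c_k).  *)
Definition As_mod (R : pzRingType) : bmod R :=
  @BMod R (fun _ => Finite.clone unit _) (fun _ _ => 0%:Z)
        (fun _ _ _ => tt) (fun _ _ _ => 0).

(* The free As-As-bimodule F1bar = As (.) k{f_n | n >= 1} (.) As.            *)
(* As a left As-module it is free on (f_{i_1} (x)..(x) f_{i_k}) m^(k), so a   *)
(* basis of F1bar(n.+1) consists of the elements                            *)
(*   (m^(j_1) (x) ... (x) m^(j_N)) (f_{i_1} (x) ... (x) f_{i_k}) m^(k),        *)
(* N = i_1 + .. + i_k, j_1 + .. + j_N = n.+1.  Such an element is encoded   *)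
(* bijectively by labelling each of the n gaps between consecutive inputs:  *)
(*   label 0 : the two inputs lie in the same block m^(j_s);                *)
(*   label 1 : different blocks m^(j_s), but entering the same f_{i_q};      *)
(*   label 2 : entering different generators f_{i_q}.                        *)
(* The degree sum_q (1 - i_q) equals minus the number of labels 1.          *)
Definition FB (n : nat) := {ffun 'I_n -> 'I_3}.

Definition lab (x : nat) : 'I_3 := inord x.

Definition degF n (b : FB n) : int := - (#|[pred g | (b g : nat) == 1%N]|)%:Z.

(* action of m^(d_0+1) (x) .. (x) m^(d_n+1): each input i is replaced by d_i+1 *)
(* inputs, all new gaps inside a block get label 0, old gaps keep labels.     *)
Definition act_labels n (d : n.+1.-tuple nat) (b : FB n) : seq nat :=
  let bs := [seq (b i : nat) | i <- enum 'I_n] in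
  flatten [seq nseq (nth 0%N d i) 0%N ++ take 1 (drop i bs) | i <- iota 0 n.+1].

Definition actF n (d : n.+1.-tuple nat) (b : FB n) : FB (sumn d + n) :=
  [ffun g : 'I_(sumn d + n) => lab (nth 0%N (act_labels d b) g)].

Definition updF n (b : FB n) (g : 'I_n) (x : nat) : FB n :=
  [ffun g' => if g' == g then lab x else b g'].

(* Differential.  The term (1^r (x) m (x) 1^t) f_{k-1} of f_k.d merges two   *)
(* adjacent blocks m^(j) under one f (label 1 -> 0), with sign (-1)^t; the  *)
(* term (-1)^j (f_i (x) f_j) m splits one f (label 1 -> 2).  Together with   *)
(* the Koszul sign (-1)^(sum of degrees of the later f's) the total sign of *)
(* both terms at gap g is +/- (-1)^(number of labels 1 to the right of g):  *)
(*   e_b . d = sum_{g, b g = 1} (-1)^#{g' > g | b g' = 1}                     *)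
(*                              (e_{b[g:=0]} - e_{b[g:=2]}).                  *)
Definition dF_coef (R : pzRingType) n (b b' : FB n) : R :=
  \sum_(g : 'I_n | (b g : nat) == 1%N)
     (-1) ^+ #|[pred g' : 'I_n | (g < g')%N && ((b g' : nat) == 1%N)]|
     * ((b' == updF b g 0)%:R - (b' == updF b g 2)%:R).

Definition F1_mod (R : pzRingType) : bmod R :=
  @BMod R (fun n => Finite.clone (FB n) _) degF actF (@dF_coef R).

(* a basis element goes to m^(n.+1) if all i_q = 1 (no label 1), else to 0.  *)
Definition pF (R : pzRingType) n (v : vec (F1_mod R) n) : vec (As_mod R) n :=
  [ffun _ => \sum_(b : FB n | [forall g, (b g : nat) != 1%N]) v b].

(* beta : As -> F1bar, the left As-module map m^(1) |-> f_1; thus           *)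
(* m^(n.+1) = (m^(n.+1)) m^(1) |-> (m^(n.+1)) f_1, the basis element with    *)
(* all labels 0.                                                            *)
Definition betaF (R : pzRingType) n (x : vec (As_mod R) n) : vec (F1_mod R) n :=
  [ffun b : FB n => if [forall g, (b g : nat) == 0%N] then x tt else 0].

(* Main.v *)
Require Import Defs.
From HB Require Import structures.
From mathcomp Require Import all_boot all_order all_algebra zify.
Import GRing.Theory.

Module W1m.
Set Implicit Arguments. Unset Strict Implicit. Unset Printing Implicit Defensive.
Import GRing.Theory.

Definition AL (ds bs : seq nat) (m : nat) : seq nat :=
  flatten [seq nseq (nth 0%N ds i) 0%N ++ take 1 (drop i bs) | i <- iota 0 m].

Lemma AL_cons ds y bs m :
  AL ds (y :: bs) m.+1 = nseq (head 0%N ds) 0%N ++ y :: AL (behead ds) bs m.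
Proof.
rewrite /AL /= -[1%N]/(1 + 0)%N iotaDl -map_comp /= take0.
have -> : nth 0%N ds 0 = head 0%N ds by case: ds.
rewrite -catA /=; congr (_ ++ _ :: flatten _); apply: eq_map => i /=.
by rewrite add1n add0n; case: ds => [|x ds] //=; rewrite !nth_nil.
Qed.

Definition posn (ds : seq nat) k := (k + sumn (take k.+1 ds))%N.

Lemma posn0 ds : posn ds 0 = head 0%N ds.
Proof. by case: ds => //= x ds; rewrite /posn /= take0 /= !addn0. Qed.

Lemma posnS ds k : posn ds k.+1 = (head 0%N ds + 1 + posn (behead ds) k)%N.
Proof. by case: ds => [|x ds]; rewrite /posn /=; lia. Qed.

Lemma nth_nseq0 x i : nth 0%N (nseq x 0%N) i = 0%N.
Proof. by rewrite nth_nseq if_same. Qed.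

Lemma AL_pos bs : forall ds k, (k < size bs)%N ->
  nth 0%N (AL ds bs (size bs).+1) (posn ds k) = nth 0%N bs k.
Proof.
elim: bs => [|y bs IH] ds k //= klt.
rewrite AL_cons; case: k klt => [|k] klt.
  by rewrite posn0 nth_cat size_nseq ltnn subnn.
rewrite posnS nth_cat size_nseq ifF; last by lia.
have -> : (head 0 ds + 1 + posn (behead ds) k - head 0 ds = (posn (behead ds) k).+1)%N by lia.
by rewrite /= IH.
Qed.

Lemma AL_npos bs : forall ds j, (forall k, (k < size bs)%N -> posn ds k != j) ->
  nth 0%N (AL ds bs (size bs).+1) j = 0%N.
Proof.
elim: bs => [|y bs IH] ds j H.
  by rewrite /AL /= !cats0 nth_nseq0.
rewrite /= AL_cons nth_cat size_nseq; case: ifP => jlt; first by rewrite nth_nseq0.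
have := H 0%N isT; rewrite posn0 => hj.
case E: (j - head 0 ds)%N => [|j']; first by exfalso; move: hj E jlt; lia.
rewrite /= IH // => k kl; have := H k.+1 kl; rewrite posnS; lia.
Qed.

Lemma sumn_take_le s i j : (i <= j)%N -> (sumn (take i s) <= sumn (take j s))%N.
Proof.
move=> ij; rewrite -(subnKC ij) takeD sumn_cat; lia.
Qed.

Lemma posn_lt ds i j : (posn ds i < posn ds j)%N = (i < j)%N.
Proof.
rewrite /posn; case: (ltnP i j) => ij.
  have := @sumn_take_le ds i.+1 j.+1 (ltnW ij); lia.
have := @sumn_take_le ds j.+1 i.+1 ij; lia.
Qed.

Lemma posn_bound n (d : n.+1.-tuple nat) (k : 'I_n) : (posn d k < sumn d + n)%N.
Proof.
rewrite /posn; have := ltn_ord k.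
have : (sumn (take k.+1 d) <= sumn d)%N.
  by rewrite -{2}(cat_take_drop k.+1 d) sumn_cat leq_addr.
lia.
Qed.

Definition posO n (d : n.+1.-tuple nat) (k : 'I_n) : 'I_(sumn d + n) :=
  Ordinal (posn_bound d k).

Lemma posO_lt n (d : n.+1.-tuple nat) i j : (posO d i < posO d j)%N = (i < j)%N.
Proof. exact: posn_lt. Qed.

Lemma posO_inj n (d : n.+1.-tuple nat) : injective (posO d).
Proof.
move=> i j e; apply: val_inj; apply/eqP.
case: (ltngtP i j) => // h.
  by have := posO_lt d i j; rewrite h e ltnn.
by have := posO_lt d j i; rewrite h e ltnn.
Qed.

Lemma act_labels_AL n (d : n.+1.-tuple nat) (b : FB n) :
  act_labels d b = AL d [seq (b i : nat) | i <- enum 'I_n] (size [seq (b i : nat) | i <- enum 'I_n]).+1.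
Proof. rewrite size_map size_enum_ord; reflexivity. Qed.

Lemma posO_val n (d : n.+1.-tuple nat) k : (posO d k : nat) = posn d k.
Proof. by []. Qed.

Lemma actF_pos n (d : n.+1.-tuple nat) (b : FB n) k : actF d b (posO d k) = b k.
Proof.
rewrite /actF ffunE act_labels_AL posO_val AL_pos; last by rewrite size_map size_enum_ord.
rewrite (nth_map k) ?size_enum_ord // nth_ord_enum.
by apply: val_inj; rewrite /lab /= inordK.
Qed.

Lemma actF_npos n (d : n.+1.-tuple nat) (b : FB n) g :
  (forall k, posO d k != g) -> (actF d b g : nat) = 0%N.
Proof.
move=> H; rewrite /actF ffunE act_labels_AL AL_npos /lab ?inordK //.
move=> k; rewrite size_map size_enum_ord => kn.
by have := H (Ordinal kn); apply: contra => /eqP e; apply/eqP/val_inj.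
Qed.

Lemma pos_case n (d : n.+1.-tuple nat) (g : 'I_(sumn d + n)) :
  {k | g = posO d k} + {forall k, posO d k != g}.
Proof.
case: (pickP (fun k => posO d k == g)) => [k /eqP e|H].
  by left; exists k.
by right => k; rewrite H.
Qed.

End W1m.

Module W2m.
Set Implicit Arguments. Unset Strict Implicit. Unset Printing Implicit Defensive.
Import GRing.Theory.
Local Open Scope ring_scope.

Lemma lab0 : (lab 0 : nat) = 0%N. Proof. by rewrite /lab inordK. Qed.
Lemma lab1 : (lab 1 : nat) = 1%N. Proof. by rewrite /lab inordK. Qed.
Lemma lab2 : (lab 2 : nat) = 2%N. Proof. by rewrite /lab inordK. Qed.
Lemma labK (x : 'I_3) : lab x = x.
Proof. by apply: val_inj; rewrite /lab /= inordK. Qed.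

Section Comb.
Variable R : comPzRingType.
Variable n : nat.
Implicit Types (b c : FB n) (g k : 'I_n).

Definition one b g := (b g : nat) == 1%N.
Definition nor b k := [forall g : 'I_n, (k < g)%N ==> ((b g : nat) != 1%N)].
Definition Kset b k := ((b k : nat) == 2%N) && nor b k.
Definition hk b k : FB n :=
  [ffun g => if g == k then lab 1 else if (k < g)%N then lab 0 else b g].
Definition Hc b c : R := \sum_(k | Kset b k) (c == hk b k)%:R.
Definition Sgn b g : R :=
  (-1) ^+ #|[pred g' : 'I_n | (g < g')%N && ((b g' : nat) == 1%N)]|.

Lemma sum_eqX (X : FB n -> R) u : \sum_c (c == u)%:R * X c = X u.
Proof.
rewrite (bigD1 u) //= eqxx mul1r big1 ?addr0 // => c /negbTE ->.
by rewrite mul0r.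
Qed.

Lemma applyD b (X : FB n -> R) :
  \sum_c dF_coef R b c * X c =
  \sum_(g | one b g) Sgn b g * (X (updF b g 0) - X (updF b g 2)).
Proof.
rewrite /dF_coef; under eq_bigr do rewrite big_distrl.
rewrite exchange_big; apply: eq_bigr => g _ /=.
under eq_bigr do rewrite -mulrA mulrBl.
rewrite -mulr_sumr sumrB !sum_eqX //.
Qed.

Lemma applyH b (X : FB n -> R) :
  \sum_c Hc b c * X c = \sum_(k | Kset b k) X (hk b k).
Proof.
rewrite /Hc; under eq_bigr do rewrite big_distrl.
by rewrite exchange_big; apply: eq_bigr => k _ /=; rewrite sum_eqX.
Qed.

Lemma updE b g x g' : updF b g x g' = if g' == g then lab x else b g'.
Proof. by rewrite ffunE. Qed.
Lemma hkE b k g : hk b k g = if g == k then lab 1 else if (k < g)%N then lab 0 else b g.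
Proof. by rewrite ffunE. Qed.

Lemma one_hk b k g : one (hk b k) g = (g == k) || ((g < k)%N && one b g).
Proof.
rewrite /one hkE; case: (g =P k) => [->|/eqP ne]; first by rewrite lab1 eqxx.
case: ltnP => h /=; first by rewrite lab0 ltnNge ltnW.
have -> : (g < k)%N by rewrite ltn_neqAle h andbT; apply: contra ne => /eqP e; apply/eqP/val_inj.
by [].
Qed.

Lemma Kset_upd_neq b g k : k != g -> Kset (updF b g 0) k = Kset (updF b g 2) k.
Proof.
move=> kg; rewrite /Kset /nor !updE (negbTE kg); congr andb; apply: eq_forallb => g'.
by rewrite !updE; case: (g' =P g) => // _; rewrite lab0 lab2.
Qed.

Lemma Kset_upd_gt b g k x : (g < k)%N -> Kset (updF b g x) k = Kset b k.
Proof.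
move=> gk; rewrite /Kset /nor updE ifF; last by apply/negbTE; apply: contraTneq gk => ->; rewrite ltnn.
congr andb; apply: eq_forallb => g'; rewrite updE; case: (g' =P g) => // ->.
by rewrite ltnNge ltnW.
Qed.

Lemma Kset_upd0 b g : Kset (updF b g 0) g = false.
Proof. by rewrite /Kset updE eqxx lab0. Qed.

Lemma Kset_upd2 b g : Kset (updF b g 2) g = nor b g.
Proof.
rewrite /Kset updE eqxx lab2 /=; apply: eq_forallb => g'; rewrite updE.
by case: (g' =P g) => // ->; rewrite ltnn.
Qed.

Lemma hk_upd_lt b g k : (k < g)%N -> hk (updF b g 0) k = hk (updF b g 2) k.
Proof.
move=> kg; apply/ffunP => g'; rewrite !hkE !updE.
case: (g' =P k) => // e; case: (g' =P g) => [->|//]; by rewrite kg.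
Qed.

Lemma hk_upd_eq b g x : hk (updF b g x) g = hk b g.
Proof.
apply/ffunP => g'; rewrite !hkE !updE.
by case: (g' =P g).
Qed.

Lemma hk_upd_gt b g k x : (g < k)%N -> hk (updF b g x) k = updF (hk b k) g x.
Proof.
move=> gk; apply/ffunP => g'; rewrite updE !hkE updE.
case: (g' =P g) => [->|_] //.
rewrite ifF; last by apply/negbTE; apply: contraTneq gk => ->; rewrite ltnn.
by rewrite ltnNge ltnW.
Qed.

Lemma Sgn_hk_k b k : Sgn (hk b k) k = 1.
Proof.
rewrite /Sgn eq_card0 ?expr0 // => g'; rewrite inE /= hkE.
case: (g' =P k) => [->|_]; first by rewrite ltnn.
by case: ltnP => //= _; rewrite lab0.
Qed.

Lemma Sgn_nor b g : nor b g -> Sgn b g = 1.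
Proof.
move=> /forallP H; rewrite /Sgn eq_card0 ?expr0 // => g'; rewrite inE /=.
by have := H g'; case: (g < g')%N => //= /negbTE ->.
Qed.

Lemma Sgn_hk_lt b k g : Kset b k -> (g < k)%N -> Sgn (hk b k) g = - Sgn b g.
Proof.
move=> /andP[bk2 /forallP nk] gk; rewrite /Sgn.
rewrite (eq_card (B := [predU1 k & [pred g' : 'I_n | (g < g')%N && ((b g' : nat) == 1%N)]])).
  rewrite cardU1 inE /= (eqP bk2) andbF /= add1n exprS mulN1r //.
move=> g'; rewrite !inE /= hkE.
case: (g' =P k) => [->|_]; first by rewrite gk lab1.
case: (ltnP k g') => h /=; last by [].
by rewrite lab0 /=; have := nk g'; rewrite h /= => /negbTE ->.
Qed.

Definition Y (b0 c : FB n) g : R := (b0 == updF c g 0)%:R - (b0 == updF c g 2)%:R.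

Lemma dF_eq c b0 : dF_coef R c b0 = \sum_(g | one c g) Sgn c g * Y b0 c g.
Proof. by []. Qed.

Lemma B_eval b b0 g : Hc (updF b g 0) b0 - Hc (updF b g 2) b0 =
  \sum_(k : 'I_n) (((g < k)%N)%:R * ((Kset b k)%:R * Y b0 (hk b k) g))
  - (nor b g)%:R * (b0 == hk b g)%:R.
Proof.
rewrite /Hc !(big_mkcond (Kset _)) -sumrB.
rewrite (bigD1 g) //= [X in _ = X - _](bigD1 g) //= ltnn mul0r add0r.
rewrite Kset_upd0 Kset_upd2 hk_upd_eq sub0r addrC; congr (_ + _); last first.
  by case: (nor b g); rewrite ?mul1r ?mul0r ?oppr0.
apply: eq_bigr => k kg.
case: (ltngtP k g) => h.
- by rewrite Kset_upd_neq // hk_upd_lt // subrr mul0r.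
- rewrite !Kset_upd_gt // !hk_upd_gt // mul1r /Y.
  by case: (Kset b k); rewrite ?mul1r ?mul0r ?subrr.
- by exfalso; move: kg; rewrite (_ : k = g) ?eqxx //; apply: val_inj.
Qed.

Lemma A_k b b0 k : Kset b k -> dF_coef R (hk b k) b0 =
  Y b0 (hk b k) k - \sum_(g : 'I_n | (g < k)%N && one b g) Sgn b g * Y b0 (hk b k) g.
Proof.
move=> Kk; rewrite dF_eq (bigD1 k) ?one_hk ?eqxx //= Sgn_hk_k mul1r.
congr (_ + _); rewrite -sumrN; apply: eq_big => g.
  rewrite one_hk; case: (g =P k) => [->|_] /=; first by rewrite ltnn.
  by rewrite andbT.
move=> /andP[]; rewrite one_hk => /orP[/eqP->|/andP[gk _]]; first by rewrite eqxx.
by rewrite Sgn_hk_lt // mulNr.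
Qed.

Lemma cross b b0 :
  \sum_(k | Kset b k) \sum_(g : 'I_n | (g < k)%N && one b g) Sgn b g * Y b0 (hk b k) g =
  \sum_(g | one b g) Sgn b g *
     \sum_(k : 'I_n) (((g < k)%N)%:R * ((Kset b k)%:R * Y b0 (hk b k) g)).
Proof.
under [RHS]eq_bigr do rewrite mulr_sumr.
rewrite [RHS]exchange_big /= [LHS]big_mkcond /=; apply: eq_bigr => k _.
case: (Kset b k).
  rewrite big_mkcond [RHS]big_mkcond; apply: eq_bigr => g _ /=.
  by case: (g < k)%N; case: (one b g); rewrite ?mul1r ?mul0r ?mulr0.
by rewrite big1 // => g _; rewrite /= mulr0n mul0r !mulr0.
Qed.

Lemma main_id b b0 :
  \sum_c Hc b c * dF_coef R c b0 + \sum_c dF_coef R b c * Hc c b0 =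
  \sum_(k | Kset b k) Y b0 (hk b k) k
  - \sum_(g | one b g) Sgn b g * ((nor b g)%:R * (b0 == hk b g)%:R).
Proof.
rewrite applyH applyD.
rewrite (eq_bigr (fun k => Y b0 (hk b k) k - \sum_(g : 'I_n | (g < k)%N && one b g) Sgn b g * Y b0 (hk b k) g)); last by move=> k Kk; rewrite A_k.
rewrite (eq_bigr (fun g => Sgn b g * \sum_(k : 'I_n) (((g < k)%N)%:R * ((Kset b k)%:R * Y b0 (hk b k) g)) - Sgn b g * ((nor b g)%:R * (b0 == hk b g)%:R)) (P := one b)); last by move=> g _; rewrite B_eval mulrBr.
rewrite !sumrB cross.
by rewrite addrA subrK.
Qed.

Definition Z b (j : nat) : FB n := [ffun g : 'I_n => if (j <= g)%N then lab 0 else b g].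

Lemma Zn b : Z b n = b.
Proof. by apply/ffunP => g; rewrite ffunE leqNgt ltn_ord. Qed.

Lemma Z0 b b0 : (b0 == Z b 0) = [forall g, (b0 g : nat) == 0%N].
Proof.
apply/eqP/forallP => [-> g|H]; first by rewrite ffunE lab0.
apply/ffunP => g; rewrite ffunE leq0n; apply: val_inj => /=; rewrite lab0; exact/eqP.
Qed.

Lemma hk_k0 b k : updF (hk b k) k 0 = Z b k.
Proof.
apply/ffunP => g; rewrite updE hkE ffunE.
case: (g =P k) => [->|ne]; first by rewrite leqnn.
case: (ltnP k g) => h; first by rewrite ltnW.
rewrite leqNgt ltn_neqAle h andbT.
have -> : (g : nat) != k by apply/eqP => e; apply: ne; apply: val_inj.
by [].
Qed.

Lemma bval b g (x : 'I_3) : (b g : nat) == x -> b g = x.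
Proof. by move/eqP => e; apply: val_inj. Qed.

Lemma hk_k2 b k : (b k : nat) == 2%N -> updF (hk b k) k 2 = Z b k.+1.
Proof.
move=> bk; apply/ffunP => g; rewrite updE hkE ffunE.
case: (g =P k) => [->|ne]; first by rewrite ltnn; symmetry; apply: bval; rewrite lab2.
case: (ltnP k g) => h; first by [].
by [].
Qed.

Lemma hk_last b k : (b k : nat) == 1%N -> hk b k = Z b k.+1.
Proof.
move=> bk; apply/ffunP => g; rewrite hkE ffunE.
case: (g =P k) => [->|ne]; first by rewrite ltnn; symmetry; apply: bval; rewrite lab1.
case: (ltnP k g) => h; first by [].
by [].
Qed.

Lemma Z_zero b k : (b k : nat) == 0%N -> Z b k = Z b k.+1.
Proof.
move=> bk; apply/ffunP => g; rewrite !ffunE.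
case: (g =P k) => [->|ne]; first by rewrite leqnn ltnn; symmetry; apply: bval; rewrite lab0.
have kg : (k : nat) != g by apply/eqP => e; apply: ne; apply: val_inj.
by rewrite leq_eqVlt (negbTE kg).
Qed.

Lemma tele b b0 (m : nat) : (m <= n)%N ->
  (forall k : 'I_n, (m <= k)%N -> (b k : nat) != 1%N) ->
  (forall k, Kset b k -> (m <= k)%N) ->
  \sum_(k | Kset b k) Y b0 (hk b k) k = (b0 == Z b m)%:R - (b0 == b)%:R.
Proof.
move=> mn H1 H2.
pose f j : R := (b0 == Z b j)%:R.
rewrite (eq_bigr (fun k : 'I_n => f k - f k.+1)); last first.
  by move=> k /andP[bk _]; rewrite /Y hk_k0 hk_k2.
rewrite big_mkcond /=.
rewrite (eq_bigr (fun k : 'I_n => if (m <= k)%N then f k - f k.+1 else 0)); last first.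
  move=> k _; case Kk: (Kset b k); first by rewrite H2.
  case: leqP => // mk; move: Kk; rewrite /Kset.
  have nk : nor b k.
    by apply/forallP => g; apply/implyP => kg; apply: H1; apply: leq_trans mk (ltnW kg).
  rewrite nk andbT => /negbT b2.
  have b1 := H1 k mk.
  have b0' : (b k : nat) == 0%N.
    by move: b1 b2; case: (b k) => [[|[|[|x]]] ?].
  by rewrite /f Z_zero // subrr.
rewrite -big_mkcond /=.
have -> : \sum_(k < n | (m <= k)%N) (f k - f k.+1) = \sum_(m <= k < n) (f k - f k.+1) by rewrite big_geq_mkord.
rewrite (eq_bigr (fun i => - (f i.+1 - f i))); last by move=> i _; rewrite opprB.
by rewrite sumrN telescope_sumr // opprB /f Zn.
Qed.

Lemma diag b b0 :
  \sum_(k | Kset b k) Y b0 (hk b k) k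
  - \sum_(g | one b g) Sgn b g * ((nor b g)%:R * (b0 == hk b g)%:R) =
  ([forall g, (b0 g : nat) == 0%N] && [forall g, (b g : nat) != 1%N])%:R - (b0 == b)%:R.
Proof.
case: (boolP [exists g, one b g]) => [/existsP[g0 Hg0] | /existsPn none].
- case: (arg_maxnP (fun g : 'I_n => (g : nat)) Hg0) => L HL Lmax.
  have nL : nor b L.
    apply/forallP => g; apply/implyP => Lg; apply/negP => og.
    by have /= := Lmax g og; rewrite leqNgt Lg.
  rewrite (@tele b b0 L.+1) //; first last.
  + move=> k /andP[bk2 /forallP nk]; rewrite ltnNge; apply/negP => kL.
    case: (k =P L) => [e|ne].
      by move: bk2 HL; rewrite e /one => /eqP ->.
    have kL' : (k < L)%N.
      by rewrite ltn_neqAle kL andbT; apply/eqP => e; apply: ne; apply: val_inj.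
    by have := nk L; rewrite kL' /=; move: HL; rewrite /one => ->.
  + move=> k Lk; apply/negP => ok.
    by have /= := Lmax k ok; rewrite leqNgt Lk.
  rewrite (bigD1 L) //= big1 => [|g /andP[og gL]]; last first.
    have ng : nor b g = false.
      apply/negbTE/forallPn; exists L; rewrite negb_imply negbK -/(one b L) HL andbT.
      have gL2 : (g <= L)%N := Lmax g og.
      rewrite ltn_neqAle gL2 andbT; apply: contra gL => /eqP e.
      by apply/eqP/val_inj.
    by rewrite ng mul0r mulr0.
  rewrite Sgn_nor // nL hk_last // mul1r addr0.
  have -> : [forall g, (b g : nat) != 1%N] = false.
    by apply/negbTE/forallPn; exists L; rewrite negbK.
  by rewrite andbF /= mulr1n mulr0n mul1r addrAC subrr.
- rewrite (@tele b b0 0) //; first last.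
  + by move=> k Lk; apply: none.
  rewrite big_pred0 => [|g]; last by apply/negbTE/none.
  rewrite subr0 Z0.
  have -> : [forall g, (b g : nat) != 1%N] by apply/forallP.
  by rewrite andbT.
Qed.

Lemma comb b b0 :
  ([forall g, (b0 g : nat) == 0%N] && [forall g, (b g : nat) != 1%N])%:R - (b0 == b)%:R =
  \sum_c Hc b c * dF_coef R c b0 + \sum_c dF_coef R b c * Hc c b0.
Proof. by rewrite main_id diag. Qed.
End Comb.

End W2m.

Module W3m.
Set Implicit Arguments. Unset Strict Implicit. Unset Printing Implicit Defensive. Import W1m W2m.
Import GRing.Theory.
Local Open Scope ring_scope.

Definition zF n : FB n := [ffun _ => lab 0].

Lemma allz_eq n (b : FB n) : [forall g, (b g : nat) == 0%N] = (b == zF n).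
Proof.
apply/forallP/eqP => [H|-> g]; last by rewrite ffunE lab0.
by apply/ffunP => g; rewrite ffunE; apply: bval; rewrite lab0.
Qed.

Lemma no1_zF n : [forall g, ((zF n) g : nat) != 1%N].
Proof. by apply/forallP => g; rewrite ffunE lab0. Qed.

Lemma degF0 n (b : FB n) : [forall g, (b g : nat) != 1%N] -> degF b = 0.
Proof.
move=> /forallP H; rewrite /degF eq_card0 // => g; rewrite inE /=.
exact/negbTE/H.
Qed.

Lemma no1_actF n (d : n.+1.-tuple nat) (b : FB n) :
  [forall g, (actF d b g : nat) != 1%N] = [forall g, (b g : nat) != 1%N].
Proof.
apply/forallP/forallP => H g.
  by have := H (posO d g); rewrite actF_pos.
case: (pos_case g) => [[k ->]|np]; first by rewrite actF_pos.
by rewrite actF_npos.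
Qed.

Lemma actF_zero n (d : n.+1.-tuple nat) : actF d (zF n) = zF (sumn d + n).
Proof.
apply/ffunP => g; rewrite [RHS]ffunE.
case: (pos_case g) => [[k ->]|np]; first by rewrite actF_pos ffunE.
by apply: bval; rewrite actF_npos // lab0.
Qed.

Lemma Kset_actF n (d : n.+1.-tuple nat) (b : FB n) k :
  Kset (actF d b) (posO d k) = Kset b k.
Proof.
rewrite /Kset /nor actF_pos; congr andb.
apply/forallP/forallP => H g.
  by have := H (posO d g); rewrite posO_lt actF_pos.
apply/implyP => kg.
case: (pos_case g) => [[j e]|np].
  by have := H j; rewrite e posO_lt in kg *; rewrite kg actF_pos.
by rewrite actF_npos.
Qed.

Lemma hk_actF n (d : n.+1.-tuple nat) (b : FB n) k :
  hk (actF d b) (posO d k) = actF d (hk b k).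
Proof.
apply/ffunP => g; rewrite hkE.
case: (pos_case g) => [[j ->]|np].
  rewrite !actF_pos hkE posO_lt.
  by case: (j =P k) => [->|ne]; [rewrite eqxx | rewrite ifF //; apply/negbTE/eqP => /posO_inj].
rewrite ifF; last by apply/negbTE/eqP => e; move: (np k); rewrite e eqxx.
have z := actF_npos (hk b k) np.
case: ifP => _; apply: val_inj; rewrite /= ?z ?lab0 //.
by rewrite actF_npos.
Qed.

Lemma Kset_actF_img n (d : n.+1.-tuple nat) (b : FB n) g :
  Kset (actF d b) g -> g \in [set posO d k | k in [set: 'I_n]].
Proof.
case: (pos_case g) => [[k ->] _|np]; first by apply/imsetP; exists k.
by rewrite /Kset actF_npos.
Qed.

Section Fin.
Variable R : comPzRingType.

Lemma reindex_pos n (d : n.+1.-tuple nat) (P : pred 'I_(sumn d + n))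
  (F : 'I_(sumn d + n) -> R) :
  (forall g, P g -> g \in [set posO d k | k in [set: 'I_n]]) ->
  \sum_(g | P g) F g = \sum_(k | P (posO d k)) F (posO d k).
Proof.
move=> HP.
rewrite big_mkcond [RHS]big_mkcond /=.
rewrite (bigID (mem [set posO d k | k in [set: 'I_n]])) /= [X in _ + X]big1 ?addr0; last first.
  by move=> g /negbTE ng; case: ifP => // /HP; rewrite ng.
rewrite big_imset /=; last by move=> x y _ _; apply: posO_inj.
by apply: eq_bigl => k; rewrite inE.
Qed.

Lemma H_act n (d : n.+1.-tuple nat) (b : FB n) b' :
  Hc R (actF d b) b' = \sum_(c | actF d c == b') Hc R b c.
Proof.
rewrite /Hc (reindex_pos (P := Kset (actF d b))); last exact: Kset_actF_img.
rewrite (eq_bigl (Kset b)); last by move=> k; rewrite Kset_actF.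
rewrite exchange_big /=; apply: eq_bigr => k _.
rewrite hk_actF big_mkcond (bigD1 (hk b k)) //= eqxx big1 ?addr0.
  by rewrite eq_sym; case: (_ == _).
by move=> c /negbTE ne; rewrite ne; case: (_ == _).
Qed.

Lemma swap_sum n (v : FB n -> R) (M N : FB n -> FB n -> R) c0 :
  \sum_c (\sum_a v a * M a c) * N c c0 = \sum_a v a * \sum_c M a c * N c c0.
Proof.
under eq_bigr do rewrite big_distrl.
rewrite exchange_big; apply: eq_bigr => a _; rewrite mulr_sumr.
by apply: eq_bigr => c _; rewrite mulrA.
Qed.

Lemma no1_upd n (b : FB n) g :
  [forall g', ((updF b g 0) g' : nat) != 1%N] = [forall g', ((updF b g 2) g' : nat) != 1%N].
Proof.
apply: eq_forallb => g'; rewrite !updE.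
by case: (g' =P g) => _; rewrite ?lab0 ?lab2.
Qed.

End Fin.

End W3m.

Import W1m W2m W3m.
Unset Implicit Arguments. Set Strict Implicit.
Import GRing.Theory.
Local Open Scope ring_scope.

Definition hF (R : comPzRingType) n (v : vec (F1_mod R) n) : vec (F1_mod R) n :=
  [ffun c => \sum_b v b * Hc R b c].

Lemma unit_sum (R : comPzRingType) (P : pred unit) (F : unit -> R) :
  P tt -> \sum_(y | P y) F y = F tt.
Proof.
by move=> Pt; rewrite (bigD1 tt) //= big1 ?addr0 // => -[] /andP[_ /eqP].
Qed.


Lemma degF_hk n (b : FB n) k : Kset b k -> degF (hk b k) = degF b - 1.
Proof.
move=> Kk; have := Kk; move/andP => [bk2 /forallP nk].
rewrite /degF (eq_card (B := [predU1 k & [pred g : 'I_n | (b g : nat) == 1%N]])).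
  rewrite cardU1 inE /= (eqP bk2) /= add1n -addn1 PoszD opprD //.
move=> g; rewrite !inE /= -/(W2m.one (hk b k) g) one_hk.
case: (g =P k) => //= ne; case: (ltnP g k) => h /=; first by [].
have : (k < g)%N.
  by rewrite ltn_neqAle h andbT; apply/eqP => e; apply: ne; apply: val_inj.
by move=> kg; have := nk g; rewrite kg /= => /negbTE ->.
Qed.

Lemma pull (R : comPzRingType) (A B : finType) (f : A -> B) (w : A -> R) (G : B -> R) :
  \sum_c (\sum_(a | f a == c) w a) * G c = \sum_a w a * G (f a).
Proof.
under eq_bigr do rewrite big_distrl.
rewrite (exchange_big_dep xpredT) //=; apply: eq_bigr => a _.
by rewrite (big_pred1 (f a)) // => c /=; rewrite eq_sym.
Qed.

Lemma allz_no1 n (b : FB n) : [forall g, (b g : nat) == 0%N] -> [forall g, (b g : nat) != 1%N].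
Proof. by move=> /forallP H; apply/forallP => g; rewrite (eqP (H g)). Qed.

Theorem mainTheorem5 (R : comPzRingType) :
  (* p and beta are closed degree-0 morphisms of left As-modules *)
  (hom_of_deg 0 (@pF R) /\ closed_hom (@pF R)) /\
  (hom_of_deg 0 (@betaF R) /\ closed_hom (@betaF R)) /\
  (* beta p = 1_As (diagrammatic order: beta then p) *)
  (forall n (x : vec (As_mod R) n), pF (betaF x) = x) /\
  (* p beta ~ 1_{F1bar}: p beta - 1 = h.d + d.h for a degree -1 morphism h *)
  (exists h : forall n, vec (F1_mod R) n -> vec (F1_mod R) n,
     hom_of_deg (-1) h /\
     forall n (v : vec (F1_mod R) n) (b : FB n),
       betaF (pF v) b - v b = vdiff (h n v) b + h n (vdiff v) b).
Proof.
split; [split; [split|]|split; [split; [split|]|split]].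
-
  move=> n a u v; apply/ffunP => x; rewrite !ffunE.
  under eq_bigr do rewrite ffunE.
  by rewrite big_split /= -mulr_sumr.
-
  move=> n k v Hv x; rewrite ffunE => H.
  case: (eqVneq k 0) => [-> //|kn].
  exfalso; move/negP: H; apply; apply/eqP.
  rewrite big1 // => b Pb; case E: (v b == 0); first exact/eqP.
  have /= e := Hv b (negbT E); move: kn; rewrite -e degF0 // eqxx.
-
  move=> n d v; apply/ffunP => x; rewrite !ffunE unit_sum ?ffunE; last by case: x.
  under eq_bigr do rewrite ffunE.
  rewrite (exchange_big_dep (fun b : FB n => [forall g, (actF d b g : nat) != 1%N])) /=;
    last by move=> b' b P /eqP ->.
  rewrite (eq_bigl (fun b : FB n => [forall g, (b g : nat) != 1%N])); last by move=> b; rewrite no1_actF.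
  apply: eq_bigr => b Pb.
  rewrite (big_pred1 (actF d b)) // => b' /=.
  rewrite eq_sym; case: eqP => [->|_]; last by rewrite andbF.
  by rewrite no1_actF Pb.
-
  move=> n v; apply/ffunP => x; rewrite !ffunE big1 => [|y _]; last by rewrite mulr0.
  under eq_bigr do rewrite ffunE.
  rewrite exchange_big /=; apply/esym; rewrite big1 // => b _.
  rewrite -mulr_sumr.
  have -> : \sum_(b' : FB n | [forall g, (b' g : nat) != 1%N]) bdiff (F1_mod R) b b'
     = \sum_(c : FB n) dF_coef R b c * ([forall g, (c g : nat) != 1%N])%:R.
    rewrite big_mkcond; apply: eq_bigr => c _ /=.
    by case: ifP; rewrite ?mulr1 ?mulr0.
  rewrite applyD big1 ?mulr0 // => g _.
  by rewrite no1_upd subrr mulr0.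
-
  move=> n a u v; apply/ffunP => b; rewrite !ffunE.
  by case: ifP => _; rewrite ?ffunE ?mulr0 ?addr0.
-
  move=> n k x Hx b; rewrite ffunE; case: ifP => [allz xt|_]; last by rewrite eqxx.
  rewrite addr0 /= degF0 ?allz_no1 //; exact: (Hx tt xt).
-
  move=> n d x; apply/ffunP => b'; rewrite !ffunE.
  rewrite [X in if _ then X else _]unit_sum //.
  under [RHS]eq_bigr do rewrite ffunE.
  rewrite [RHS]big_mkcond (bigD1 (zF n)) //= [X in _ = _ + X]big1 ?addr0; last first.
    by move=> b ne; rewrite allz_eq (negbTE ne); case: ifP.
  rewrite actF_zero (allz_eq (zF n)) eqxx (allz_eq b') [zF _ == _]eq_sym.
  by case: ifP.
-
  move=> n x; apply/ffunP => b'; rewrite !ffunE.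
  rewrite big1; last first.
    move=> b _; rewrite ffunE; case: ifP => allz; last by rewrite mul0r.
    rewrite /= /dF_coef big_pred0 ?mulr0 // => g.
    by move: allz => /forallP /(_ g) /eqP ->.
  case: ifP => _ //; rewrite big1 // => y _; by rewrite mulr0.
-
  move=> n x; apply/ffunP => -[]; rewrite ffunE.
  under eq_bigr do rewrite ffunE.
  rewrite (bigD1 (zF n)) ?no1_zF //= allz_eq eqxx big1 ?addr0 // => b /andP[_ ne].
  by rewrite allz_eq (negbTE ne).
-
  exists (@hF R); split; [split|].
  + move=> n a u v; apply/ffunP => c; rewrite !ffunE.
    under eq_bigr do rewrite ffunE mulrDl -mulrA.
    by rewrite big_split -mulr_sumr.
  + move=> n k v Hv c; rewrite ffunE => H.
    case: (eqVneq (degF c) (k + -1)) => // ne.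
    exfalso; move/negP: H; apply; apply/eqP; rewrite big1 // => b _.
    case E: (v b == 0); first by rewrite (eqP E) mul0r.
    rewrite /Hc big1 ?mulr0 // => k0 Kk0.
    case: eqP => [e|_]; last exact: mulr0n.
    exfalso; move: ne; rewrite e degF_hk //.
    by have /= -> := Hv b (negbT E); rewrite eqxx.
  + move=> n d v; apply/ffunP => b'; rewrite !ffunE.
    under eq_bigr do rewrite ffunE.
    rewrite pull.
    under [RHS]eq_bigr do rewrite ffunE.
    rewrite exchange_big /=; apply: eq_bigr => b _.
    by rewrite -mulr_sumr H_act.
  + move=> n v b.
    have E1 : vdiff (@hF R n v) b = \sum_a v a * \sum_c Hc R a c * dF_coef R c b.
      rewrite ffunE; under eq_bigr do rewrite ffunE.
      under eq_bigr do rewrite big_distrl.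
      rewrite exchange_big; apply: eq_bigr => a _; rewrite mulr_sumr.
      by apply: eq_bigr => c _; rewrite mulrA.
    have E2 : @hF R n (vdiff v) b = \sum_a v a * \sum_c dF_coef R a c * Hc R c b.
      rewrite ffunE; under eq_bigr do rewrite ffunE.
      under eq_bigr do rewrite big_distrl.
      rewrite exchange_big; apply: eq_bigr => a _; rewrite mulr_sumr.
      by apply: eq_bigr => c _; rewrite mulrA.
    rewrite E1 E2 -big_split /=.
    under eq_bigr do rewrite -mulrDr -comb mulrBr.
    rewrite sumrB (bigD1 b) //= [X in _ = _ - X](bigD1 b) //= eqxx mulr1.
    rewrite [X in _ = _ - (_ + X)]big1 ?addr0; last first.
      by move=> a ne; rewrite eq_sym (negbTE ne) mulr0.
    congr (_ - _).
    rewrite -(bigD1 b (P := xpredT)) //= ffunE.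
    case: ifP => allz /=.
      rewrite ffunE big_mkcond; apply: eq_bigr => c _.
      by case: ifP; rewrite ?mulr1 ?mulr0.
    by rewrite big1 // => c _; rewrite mulr0.
Qed.
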